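(* Let $q$ be even and let $V$ be a $(2m+1)$-dimensional vector space over $\mathbb F_q$ with a nonsingular quadratic form $Q$. Let $W,W'$ be nondegenerate hyperplanes of $V$ (not necessarily of the same type). Then $\Omega(W)\cap\mathrm O(W')\leq\Omega(W')$, as subgroups of the isometry group of $(V,Q)$.
   Context: $Q$ nonsingular means that there is no nonzero $v$ in the radical $V^\perp$ of the associated bilinear form with $Q(v)=0$; then $V^\perp$ is $1$-dimensional. A nondegenerate hyperplane is a hyperplane $W$ with $V=W\oplus V^\perp$ (so $Q|_W$ is nondegenerate). For such $W$, $\mathrm O(W)$ (equal to $\mathrm{SO}(W)$ as $q$ is even) is identified with the group of isometries of $V$ stabilizing $W$ and acting trivially on $V^\perp$, and $\Omega(W)$ is its index-$2$ subgroup, which consists of the $g\in\mathrm O(W)$ with $\dim C_W(g)$ even. *)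

(* Defs.v *)
From HB Require Import structures.
From mathcomp Require Import all_boot all_order all_fingroup all_algebra.
Set Implicit Arguments. Unset Strict Implicit. Unset Printing Implicit Defensive.
Import GRing.Theory.
Local Open Scope ring_scope.

(* V = F^(n+1) as row vectors; a quadratic form Q on V is v |-> v A v^T
   for a (non-unique) matrix A; its polar bilinear form
   B(u,w) = Q(u+w) - Q(u) - Q(w) has Gram matrix A + A^T. *)
Section Quad.
Variables (F : fieldType) (n : nat).
Implicit Types (A W : 'M[F]_n.+1) (v : 'rV[F]_n.+1).

Definition qform A v : F := (v *m A *m v^T) 0 0.

Definition radical A : 'M[F]_n.+1 := kermx (A + A^T).

Definition nonsingular A : Prop :=
  forall v, (v <= radical A)%MS -> qform A v = 0 -> v = 0.

Definition nondeg_hyperplane A W : Prop :=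
  [/\ \rank W = n, (W :&: radical A == (0 : 'M_n.+1))%MS & (W + radical A == 1%:M)%MS].
End Quad.

Section Groups.
Variables (F : finFieldType) (n : nat).
Implicit Types (A W : 'M[F]_n.+1).

Definition isom_grp A : {set {'GL_n.+1[F]}} :=
  [set g : {'GL_n.+1[F]} | [forall v : 'rV[F]_n.+1,
     qform A (v *m GLval g) == qform A v]].

(* O(W): isometries stabilizing W and acting trivially on V^perp *)
Definition Orth A W : {set {'GL_n.+1[F]}} :=
  [set g in isom_grp A | (W *m GLval g == W)%MS &&
     (radical A *m GLval g == radical A)].

Definition fixW W (g : {'GL_n.+1[F]}) : 'M[F]_n.+1 :=
  (W :&: kermx (GLval g - 1%:M))%MS.

Definition Omega A W : {set {'GL_n.+1[F]}} :=
  [set g in Orth A W | ~~ odd (\rank (fixW W g))].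
End Groups.

(* Main.v *)
Require Import Defs.
From mathcomp Require Import all_boot all_order all_fingroup all_algebra.
Import GRing.Theory.
Local Open Scope ring_scope.

Lemma key (F : fieldType) (k : nat) (W R K : 'M[F]_k) :
  (R <= K)%MS -> (W :&: R == (0 : 'M[F]_k))%MS -> (W + R == (1%:M : 'M[F]_k))%MS ->
  (\rank (W :&: K) + \rank R = \rank K)%N.
Proof.
move=> sRK WR0 WR1.
have e := matrix_modl W sRK.
have e1 : ((R + W) :&: K :=: K)%MS.
  have /eqmxP e2 : (R + W == (1%:M : 'M[F]_k))%MS by rewrite addsmxC.
  by apply/capmx_idPr; rewrite e2 submx1.
have h := mxrank_sum_cap R (W :&: K)%MS.
have z : \rank (R :&: (W :&: K)) = 0%N.
  apply/eqP; rewrite mxrank_eq0 -submx0.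
  apply: (submx_trans _ (proj1 (andP WR0))).
  rewrite capmxC; apply: capmxS; last exact: submx_refl.
  exact: capmxSl.
rewrite z addn0 e e1 in h.
by rewrite h addnC.
Qed.

Theorem mainTheorem14 (F : finFieldType) (m : nat) (A W W' : 'M[F]_((2 * m).+1)) :
  (2%N \in [pchar F]) ->
  nonsingular A ->
  nondeg_hyperplane A W -> nondeg_hyperplane A W' ->
  Omega A W :&: Orth A W' \subset Omega A W'.
Proof.
move=> _ _ [_ h1 h2] [_ h1' h2'].
apply/subsetP => g; rewrite inE => /andP [].
rewrite /Omega !inE => /andP [/andP [_ /andP [_ hR]] hodd] hO.
rewrite hO /=.
have sRK : (radical A <= kermx (GLval g - 1%:M))%MS.
  apply/sub_kermxP; rewrite mulmxBr mulmx1 (eqP hR) subrr //.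
have e := @key _ _ W _ _ sRK h1 h2.
have e' := @key _ _ W' _ _ sRK h1' h2'.
rewrite /fixW.
have -> : \rank (W' :&: kermx (GLval g - 1%:M))%MS = \rank (W :&: kermx (GLval g - 1%:M))%MS.
  by apply/eqP; rewrite -(eqn_add2r (\rank (radical A))) e e'.
exact: hodd.
Qed.
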